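(* Let $p,q$ be two distinct prime numbers and $l$ a positive integer. Then $\dfrac{1}{p}\in\mathbb{Q}\text{-}\mathcal{KS}(q^{l})$ if and only if $\dfrac{1}{q}\in\mathbb{Q}\text{-}\mathcal{KS}(p^{l})$.
   Context: Every nonzero rational $\alpha$ is written $\alpha=\alpha_1/\alpha_2$ with $\alpha_1\in\mathbb{Z}$, $\alpha_2$ a positive integer and $\gcd(\alpha_1,\alpha_2)=1$. For an integer $N\ge 2$ and a nonzero rational $\alpha=\alpha_1/\alpha_2$, $N$ is called an $\alpha$-Korselt number if $N\neq\alpha$ and $\alpha_2r-\alpha_1$ divides $\alpha_2N-\alpha_1$ (in $\mathbb{Z}$) for every prime divisor $r$ of $N$. $\mathbb{Q}\text{-}\mathcal{KS}(N)$ is the set of all $\beta\in\mathbb{Q}\setminus\{0,N\}$ such that $N$ is a $\beta$-Korselt number. *)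

(* Defs.v *)
From mathcomp Require Import all_boot all_order all_algebra.
Set Implicit Arguments. Unset Strict Implicit. Unset Printing Implicit Defensive.
Import Order.TTheory GRing.Theory Num.Theory.
Local Open Scope ring_scope.

(* alpha = alpha_1 / alpha_2 in lowest terms, alpha_2 > 0:
   alpha_1 = numq alpha, alpha_2 = denq alpha. *)

Definition korselt (alpha : rat) (N : nat) : Prop :=
  [/\ (2 <= N)%N, alpha != 0, alpha != (N%:R : rat) &
    forall r : nat, prime r -> (r %| N)%N ->
      (denq alpha * r%:Z - numq alpha %| denq alpha * N%:Z - numq alpha)%Z].

Definition QKS (N : nat) (beta : rat) : Prop :=
  beta != 0 /\ beta != (N%:R : rat) /\ korselt beta N.

(* Main.v *)
Require Import Defs.
From mathcomp Require Import all_boot all_order all_algebra.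
From mathcomp Require Import ring.
Import Order.TTheory GRing.Theory Num.Theory.
Local Open Scope ring_scope.

Lemma nd (p : nat) : (0<p)%N -> numq (1 / p%:R : rat) = 1 /\ denq (1/p%:R : rat) = p%:Z.
Proof.
move=> p0.
have e: (1/p%:R : rat) = ((p%:Z)%:~R)^-1 by rewrite div1r.
have hd : denq (1/p%:R : rat) = p%:Z by rewrite e denqVz // lt0n_neq0.
split=>//.
apply/(@intr_inj rat); rewrite numqE hd div1r -pmulrn mulVf //.
by rewrite pnatr_eq0 -lt0n.
Qed.

Lemma geo (x : int) k : exists S, x ^+ k - 1 = S * (x - 1).
Proof.
elim: k => [|k [S IH]]; first by exists 0; rewrite expr0 subrr mul0r.
exists (x * S + 1); rewrite exprS.
have -> : x * x ^+ k - 1 = x * (x ^+ k - 1) + (x - 1) by ring.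
rewrite IH; ring.
Qed.

Lemma keyd (a b : int) (k : nat) :
  (a * b - 1 %| a * b ^+ k.+1 - 1)%Z -> (b * a - 1 %| b * a ^+ k.+1 - 1)%Z.
Proof.
move=> /dvdzP [c Hc]; apply/dvdzP.
have Hb : b ^+ k - 1 = (c - b ^+ k) * (a * b - 1).
  have -> : b ^+ k - 1 = (a * b ^+ k.+1 - 1) - b ^+ k * (a * b - 1)
    by rewrite exprS; ring.
  rewrite Hc; ring.
have [S HS] := geo (a * b) k.
have Ha : a ^+ k - 1 = (S - a ^+ k * (c - b ^+ k)) * (a * b - 1).
  have -> : a ^+ k - 1 = ((a * b) ^+ k - 1) - a ^+ k * (b ^+ k - 1)
    by rewrite exprMn; ring.
  rewrite HS Hb; ring.
exists (a ^+ k + (S - a ^+ k * (c - b ^+ k))).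
have -> : b * a ^+ k.+1 - 1 = a ^+ k * (a * b - 1) + (a ^+ k - 1)
  by rewrite exprS; ring.
rewrite Ha; ring.
Qed.

Lemma PX (q l : nat) : (q^l)%N%:Z = q%:Z ^+ l.
Proof. by rewrite -[q%:Z]natz -natrX natz. Qed.

Lemma onedir (p q l : nat) :
  prime p -> prime q -> (0 < l)%N ->
  QKS (q ^ l) (1 / p%:R) -> QKS (p ^ l) (1 / q%:R).
Proof.
move=> pp pq l0 [_ [_ [_ _ _ H]]].
have p0 := prime_gt0 pp; have q0 := prime_gt0 pq.
have [np dp] := @nd p p0; have [nq dq] := @nd q q0.
have ne0 : (1 / q%:R : rat) != 0 by rewrite div1r invr_eq0 pnatr_eq0 -lt0n.
have neN : (1 / q%:R : rat) != (p ^ l)%:R.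
  apply/eqP => h; move: dq; rewrite h pmulrn denq_int => /eqP.
  by rewrite eqz_nat => /eqP qe; move: pq; rewrite -qe.
have h2 : (2 <= p ^ l)%N.
  apply: (leq_trans (prime_gt1 pp)); by rewrite -{1}(expn1 p) leq_pexp2l ?prime_gt1.
split=> //; split=> //; split=> // r pr.
rewrite Euclid_dvdX // l0 andbT dvdn_prime2 // => /eqP ->.
have := H q pq; rewrite Euclid_dvdX // dvdnn l0 => /(_ isT).
rewrite np dp nq dq !PX.
case: l l0 {H h2 neN} => // k _.
exact: keyd.
Qed.

Theorem proposition5p3 (p q l : nat) :
  prime p -> prime q -> p <> q -> (0 < l)%N ->
  (QKS (q ^ l) (1 / p%:R) <-> QKS (p ^ l) (1 / q%:R)).
Proof.
move=> pp pq _ l0; split; exact: onedir.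
Qed.
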